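(* Let $G\in[0,1]^{Q\times Q}$ be a stochastic matrix ($G\vec 1=\vec 1$) over a finite set $Q$ such that the directed graph of $G$ (edge $p\to q$ iff $G[p,q]>0$) has exactly one bottom strongly connected component, and let $y_{\min}$ be the smallest nonzero entry of $G$. Let $\vec r\in\mathbb{R}^Q$ and $\vec f(n)=\sum_{i=0}^{n-1}G^i\vec r$ for $n\in\mathbb{N}$. For $\vec v\in\mathbb{R}^Q$ put $|\vec v|_{\mathit{diff}}=\max_{p_1,p_2\in Q}|\vec v[p_1]-\vec v[p_2]|$. Then $|\vec f(n)|_{\mathit{diff}}\le C\,|\vec r|_{\mathit{diff}}$ for all $n\in\mathbb{N}$, where $C=10|Q|/y_{\min}^{|Q|}$.
   Context: Bottom strongly connected component: a strongly connected component of the graph with no edges leaving it. *)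

(* Defs.v *)
From HB Require Import structures.
From mathcomp Require Import all_boot all_order all_algebra.
Set Implicit Arguments. Unset Strict Implicit. Unset Printing Implicit Defensive.
Import Order.TTheory GRing.Theory Num.Theory.
Local Open Scope ring_scope.

(* Q is represented as 'I_n, so |Q| = n. *)

Definition stochastic (R : realFieldType) (n : nat) (G : 'M[R]_n) : Prop :=
  (forall p q, 0 <= G p q <= 1) /\ (forall p, \sum_(q < n) G p q = 1).

Definition gedge (R : realFieldType) (n : nat) (G : 'M[R]_n) : rel 'I_n :=
  fun p q => 0 < G p q.

Definition is_scc (n : nat) (e : rel 'I_n) (S : {set 'I_n}) : Prop :=
  S != set0 /\
  (forall x, x \in S -> forall y, (y \in S) = (connect e x y && connect e y x)).

Definition is_bottom_scc (n : nat) (e : rel 'I_n) (S : {set 'I_n}) : Prop :=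
  is_scc e S /\ (forall x y, x \in S -> e x y -> y \in S).

Definition unique_bottom_scc (n : nat) (e : rel 'I_n) : Prop :=
  exists S, is_bottom_scc e S /\ (forall S', is_bottom_scc e S' -> S' = S).

(* Smallest nonzero entry of G (default 1 is harmless: entries are <= 1 and a
   stochastic matrix over a nonempty Q has a nonzero entry). *)
Definition ymin (R : realFieldType) (n : nat) (G : 'M[R]_n) : R :=
  \big[Num.min/1]_(p < n) \big[Num.min/1]_(q < n | G p q != 0) G p q.

Definition mxpow (R : realFieldType) (n : nat) (G : 'M[R]_n) (i : nat) : 'M[R]_n :=
  iter i (mulmx G) 1%:M.

Definition fsum (R : realFieldType) (n : nat) (G : 'M[R]_n) (r : 'cV[R]_n) (k : nat)
  : 'cV[R]_n := \sum_(i < k) (mxpow G i *m r).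

Definition diffnorm (R : realFieldType) (n : nat) (v : 'cV[R]_n) : R :=
  \big[Num.max/0]_(p1 < n) \big[Num.max/0]_(p2 < n) `|v p1 0 - v p2 0|.

(* Main.v *)
Require Import Defs.
From HB Require Import structures.
From mathcomp Require Import all_boot all_order all_algebra.
From mathcomp Require Import ring lra zify.
Import Order.TTheory GRing.Theory Num.Theory.

Lemma reach_sink (n : nat) (e : rel 'I_n) (hB : unique_bottom_scc e) :
  exists s, forall p, connect e p s.
Proof.
case: hB => S [[[SN0 _] _] Huniq].
case/set0Pn: SN0 => s sS; exists s => p.
pose reach x := [set y | connect e x y].
have Pp : connect e p p by exact: connect0.
case: (arg_minnP (fun x => #|reach x|) Pp) => x px xmin.
have back : forall y, connect e x y -> connect e y x.
  move=> y xy.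
  have sub : reach y \subset reach x.
    by apply/subsetP=> z; rewrite !inE => yz; exact: connect_trans xy yz.
  have card : #|reach x| <= #|reach y| by apply: xmin; exact: connect_trans px xy.
  have eq : reach y = reach x by apply/eqP; rewrite eqEcard sub.
  have : x \in reach y by rewrite eq inE connect0.
  by rewrite inE.
have bot : is_bottom_scc e (reach x).
  split; [split|].
  - by apply/set0Pn; exists x; rewrite inE connect0.
  - move=> z; rewrite inE => xz y; rewrite inE.
    apply/idP/andP.
    + move=> xy; split; first exact: connect_trans (back _ xz) xy.
      exact: connect_trans (back _ xy) xz.
    + by case=> zy _; exact: connect_trans xz zy.
  - move=> z y; rewrite !inE => xz ezy.
    by apply: connect_trans xz _; exact: connect1.
have := Huniq _ bot => eqS.
have : s \in reach x by rewrite eqS.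
by rewrite inE; exact: connect_trans px.
Qed.

Local Open Scope ring_scope.


Lemma sumG_aff (R : realFieldType) (n : nat) (G : 'M[R]_n) p (c d : R) (phi : 'I_n -> R) :
  \sum_q G p q = 1 ->
  \sum_q G p q * (c + d * phi q) = c + d * \sum_q G p q * phi q.
Proof.
move=> hs.
rewrite (eq_bigr (fun q => c * G p q + d * (G p q * phi q))); last first.
  by move=> q _; rewrite mulrDr mulrCA mulrC.
by rewrite big_split /= -!mulr_sumr hs mulr1.
Qed.

Lemma fbound (R : realFieldType) (n : nat) (G : 'M[R]_n) (s : 'I_n)
  (phi r : 'I_n -> R) (a b : R) (fn : nat -> 'I_n -> R) :
  (forall p q, 0 <= G p q) -> (forall p, \sum_q G p q = 1) ->
  (forall p, 0 <= phi p) ->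
  (forall p, p != s -> 1 + \sum_q G p q * phi q <= phi p) ->
  (forall p, a <= r p <= b) ->
  (forall p, fn 0%N p = 0) ->
  (forall k p, fn k.+1 p = r p + \sum_q G p q * fn k q) ->
  (forall k, a <= fn k.+1 s - fn k s <= b) ->
  forall k p, `|fn k p - fn k s| <= (b - a) * phi p.
Proof.
move=> G0 G1 phi0 phiS rab f0 fS finc.
have ab : a <= b by case/andP: (rab s) => h1 h2; exact: le_trans h2.
have D0 : 0 <= b - a by rewrite subr_ge0.
elim=> [|k IH] p.
  by rewrite !f0 subrr normr0 mulr_ge0.
have [->|ps] := eqVneq p s; first by rewrite subrr normr0 mulr_ge0.
have hp := phiS p ps.
case/andP: (rab p) => ra rb.
case/andP: (finc k) => i1 i2.
have up : \sum_q G p q * fn k q <= \sum_q G p q * (fn k s + (b - a) * phi q).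
  apply: ler_sum => q _; apply: ler_wpM2l => //.
  have := IH q; rewrite ler_norml => /andP [_ h]. lra.
have lo : \sum_q G p q * (fn k s + (- (b - a)) * phi q) <= \sum_q G p q * fn k q.
  apply: ler_sum => q _; apply: ler_wpM2l => //.
  have := IH q; rewrite ler_norml => /andP [h _]; lra.
rewrite !sumG_aff // in up lo.
have hD1 : (b - a) * (1 + \sum_q G p q * phi q) <= (b - a) * phi p by rewrite ler_wpM2l.
rewrite mulrDr mulr1 in hD1; rewrite mulNr in lo.
move: hD1 lo up; set X := (b - a) * _; set Y := (b - a) * phi p => hD1 lo up.
rewrite ler_norml fS; apply/andP; split; lra.
Qed.

Lemma potential (R : realFieldType) n (G : 'M[R]_n) (s : 'I_n) (y : R) :
 (forall p q, 0 <= G p q) -> (forall p, \sum_q G p q = 1) -> 0 < y -> y <= 1 ->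
 (forall p q, 0 < G p q -> y <= G p q) ->
 (forall p, connect (gedge G) p s) ->
 exists phi : 'I_n -> R, (forall p, 0 <= phi p /\ phi p <= n%:R * (y^-1)^+n) /\
   (forall p, p != s -> 1 + \sum_q G p q * phi q <= phi p).
Proof.
move=> G0 G1 y0 y1 Gy conn.
pose F (X : {set 'I_n}) := s |: [set p | [exists q in X, gedge G p q]].
have Fmono : {homo F : X Y / X \subset Y}.
  move=> X Y XY; apply/subsetP => p; rewrite !inE => /orP [->//|/existsP [q /andP [qX e]]].
  by apply/orP; right; apply/existsP; exists q; rewrite e (subsetP XY).
pose Rs k := iter k F set0.
have RsT : forall p, p \in Rs n.
  have eX : fixset F = Rs n by rewrite /fixset card_ord.
  have FX := fixsetK Fmono; rewrite eX in FX.
  have sX : s \in Rs n by rewrite -FX !inE eqxx.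
  move=> p; case/connectP: (conn p) => l.
  elim: l p => [|q l IH] p /=; first by move=> _ <-.
  move=> /andP [epq ql] el.
  have qX := IH q ql el.
  by rewrite -FX !inE; apply/orP; right; apply/existsP; exists q; rewrite qX.
have Rstep : forall k p, p \in Rs k.+1 -> p != s -> exists2 q, q \in Rs k & 0 < G p q.
  move=> k p; rewrite /= !inE => /orP [/eqP -> |/existsP [q /andP [qX e]]]; first by rewrite eqxx.
  by move=> _; exists q.
pose a k := (y^-1)^+(n - k).
pose chi k p := ((p \in Rs k)%:R : R).
pose w p := \sum_(0 <= k < n) a k * chi k p.
pose M := \sum_(0 <= k < n) a k.
have a0 : forall k, 0 <= a k by move=> k; rewrite exprn_ge0 // invr_ge0 ltW.
have chi01 : forall k p, 0 <= chi k p <= 1 by move=> k p; rewrite /chi; case: (p \in Rs k); rewrite /= ?lexx ?ler01.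
have ay : forall k, (k < n)%N -> a k * y = a k.+1.
  move=> k kn; rewrite /a (_ : (n - k = (n - k.+1).+1)%N); last by lia.
  by rewrite exprS mulrC mulrA mulfV ?gt_eqF // mul1r.
have key : forall p, p != s -> w p + 1 <= \sum_q G p q * w q.
  move=> p ps.
  have -> : \sum_q G p q * w q = \sum_(0 <= k < n) a k * \sum_q G p q * chi k q.
    rewrite (eq_bigr (fun q => \sum_(0 <= k < n) G p q * (a k * chi k q))); last first.
      by move=> q _; rewrite mulr_sumr.
    rewrite exchange_big /=; apply: eq_bigr => k _; rewrite mulr_sumr.
    by apply: eq_bigr => q _; rewrite mulrCA.
  have step : \sum_(0 <= k < n) a k.+1 * chi k.+1 p <= \sum_(0 <= k < n) a k * \sum_q G p q * chi k q.
    rewrite big_nat_cond [X in _ <= X]big_nat_cond; apply: ler_sum => k /andP [/andP [_ kn] _].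
    rewrite -ay // -mulrA ler_wpM2l //.
    rewrite /chi; case: (boolP (p \in Rs k.+1)) => hp; last first.
      by rewrite mulr0 sumr_ge0 // => q _; rewrite mulr_ge0 //; case/andP: (chi01 k q).
    case: (Rstep k p hp ps) => q qk Gq.
    rewrite mulr1 (bigD1 q) //= qk mulr1.
    rewrite -[y]addr0 lerD ?Gy // sumr_ge0 // => q' _; rewrite mulr_ge0 //.
  apply: le_trans step; rewrite le_eqVlt; apply/orP; left; apply/eqP.
  have e1 : \sum_(0<=k<n.+1) a k * chi k p = a 0%N * chi 0%N p + \sum_(0<=k<n) a k.+1 * chi k.+1 p.
    by rewrite big_nat_recl.
  have e2 : \sum_(0<=k<n.+1) a k * chi k p = w p + a n * chi n p by rewrite big_nat_recr.
  have c0 : chi 0%N p = 0 by rewrite /chi in_set0.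
  rewrite c0 mulr0 add0r in e1.
  rewrite -e1 e2 /chi RsT /a subnn expr0 mulr1 //.
pose phi p := M - w p.
have wM : forall p, 0 <= w p <= M.
  move=> p; apply/andP; split; first by apply: sumr_ge0 => k _; rewrite mulr_ge0 //; case/andP: (chi01 k p).
  apply: ler_sum => k _; case/andP: (chi01 k p) => c0 c1.
  by rewrite -[X in _ <= X]mulr1 ler_wpM2l.
have Mb : M <= n%:R * (y^-1)^+n.
  have -> : n%:R * (y^-1)^+n = \sum_(0 <= k < n) (y^-1)^+n.
    by rewrite sumr_const_nat subn0 mulr_natl.
  apply: ler_sum => k _; apply: ler_weXn2l; last exact: leq_subr.
  by rewrite invf_ge1.
exists phi; split.
  move=> p; have := wM p; rewrite /phi => /andP [h1 h2]; split; lra.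
move=> p ps; have := key p ps.
have -> : \sum_q G p q * phi q = M + (-1) * \sum_q G p q * w q.
  rewrite -sumG_aff //; apply: eq_bigr => q _; rewrite /phi; congr (_ * _); lra.
rewrite /phi; lra.
Qed.



Lemma ymin_facts (R : realFieldType) n (G : 'M[R]_n) :
  (forall p q, 0 <= G p q) ->
  0 < ymin G /\ ymin G <= 1 /\ (forall p q, 0 < G p q -> ymin G <= G p q).
Proof.
move=> G0; split; [|split].
- apply: lt_bigmin => // p _; apply: lt_bigmin => // q /= hq.
  by rewrite lt_neqAle eq_sym hq G0.
- exact: bigmin_le_id.
- move=> p q hq; apply: le_trans (bigmin_le _ p _) _.
  by apply: bigmin_le_cond; rewrite gt_eqF.
Qed.

Lemma mxpow_bound (R : realFieldType) n (G : 'M[R]_n) (r : 'cV[R]_n) (a b : R) :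
  (forall p q, 0 <= G p q) -> (forall p, \sum_q G p q = 1) ->
  (forall p, a <= r p 0 <= b) ->
  forall k p, a <= (mxpow G k *m r) p 0 <= b.
Proof.
move=> G0 G1 rab; elim=> [|k IH] p; first by rewrite /mxpow /= mul1mx.
rewrite /mxpow iterS -/(mxpow G k) -mulmxA mxE.
apply/andP; split.
- have h1 : a = \sum_q G p q * a by rewrite -mulr_suml G1 mul1r.
  rewrite [X in X <= _]h1.
  by apply: ler_sum => q _; apply: ler_wpM2l => //; case/andP: (IH q).
- have h1 : b = \sum_q G p q * b by rewrite -mulr_suml G1 mul1r.
  rewrite [X in _ <= X]h1.
  by apply: ler_sum => q _; apply: ler_wpM2l => //; case/andP: (IH q).
Qed.

Lemma fsumS (R : realFieldType) n (G : 'M[R]_n) (r : 'cV[R]_n) k :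
  fsum G r k.+1 = r + G *m fsum G r k.
Proof.
rewrite /fsum big_ord_recl /= /mxpow /= mul1mx mulmx_sumr; congr (_ + _).
by apply: eq_bigr => i _; rewrite /bump /= mulmxA.
Qed.

Lemma fsumS' (R : realFieldType) n (G : 'M[R]_n) (r : 'cV[R]_n) k :
  fsum G r k.+1 = fsum G r k + mxpow G k *m r.
Proof. by rewrite /fsum big_ord_recr. Qed.

Theorem mainTheorem19 (R : realFieldType) (n : nat) (G : 'M[R]_n) (r : 'cV[R]_n)
  (hG : stochastic G) (hB : unique_bottom_scc (gedge G)) :
  forall k : nat,
    diffnorm (fsum G r k) <= (10 * n%:R / ymin G ^+ n) * diffnorm r.
Proof.
move=> k; case: hG => Gb G1.
have G0 : forall p q, 0 <= G p q by move=> p q; case/andP: (Gb p q).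
case: (@reach_sink _ _ hB) => s conn.
case: (@ymin_facts _ _ _ G0) => y0 [y1 Gy].
case: (@potential _ _ _ _ _ G0 G1 y0 y1 Gy conn) => phi [phib phiS].
set y := ymin G in y0 y1 Gy phib *.
set D := diffnorm r.
have rdiff : forall p1 p2, `|r p1 0 - r p2 0| <= D.
  move=> p1 p2; apply: le_trans (le_bigmax _ _ p1).
  exact: (le_bigmax _ (fun p2 => `|r p1 0 - r p2 0|) p2).
have D0 : 0 <= D by apply: le_trans (rdiff s s); exact: normr_ge0.
pose a := r s 0 - D; pose b := r s 0 + D.
have rab : forall p, a <= r p 0 <= b.
  by move=> p; have := rdiff p s; rewrite ler_norml /a /b => /andP [h1 h2]; apply/andP; split; lra.
have hb := @fbound R n G s phi (fun p => r p 0) a b (fun k p => fsum G r k p 0) G0 G1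
  (fun p => proj1 (phib p)) phiS rab.
have {}hb : forall k p, `|fsum G r k p 0 - fsum G r k s 0| <= (b - a) * phi p.
  apply: hb.
  - by move=> p; rewrite /fsum big_ord0 mxE.
  - by move=> k' p; rewrite fsumS !mxE.
  - move=> k'; rewrite fsumS' mxE addrAC subrr add0r.
    exact: (@mxpow_bound _ _ _ _ _ _ G0 G1 rab).
set K := n%:R * (y^-1)^+n.
have -> : 10 * n%:R / y ^+ n * D = 10 * (K * D) by rewrite /K exprVn !mulrA.
have KD : forall p, phi p * D <= K * D by move=> p; rewrite ler_wpM2r //; case: (phib p).
have hba : b - a = 2 * D by rewrite /a /b; lra.
apply: bigmax_le => [|p1 _]; first by rewrite mulr_ge0 // mulr_ge0 // /K mulr_ge0 // exprn_ge0 // invr_ge0 ltW.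
apply: bigmax_le => [|p2 _]; first by rewrite mulr_ge0 // mulr_ge0 // /K mulr_ge0 // exprn_ge0 // invr_ge0 ltW.
have h1 := hb k p1; have h2 := hb k p2; rewrite hba in h1 h2.
have k1 := KD p1; have k2 := KD p2.
have tri : `|fsum G r k p1 0 - fsum G r k p2 0| <=
   `|fsum G r k p1 0 - fsum G r k s 0| + `|fsum G r k p2 0 - fsum G r k s 0|.
  rewrite (_ : fsum G r k p1 0 - fsum G r k p2 0 = (fsum G r k p1 0 - fsum G r k s 0) - (fsum G r k p2 0 - fsum G r k s 0)); last by lra.
  exact: ler_normB.
have KD0 : 0 <= K * D by rewrite mulr_ge0 // /K mulr_ge0 // exprn_ge0 // invr_ge0 ltW.
move: KD0; rewrite -mulrA (mulrC D) in h1; rewrite -mulrA (mulrC D) in h2.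
move: tri h1 h2 k1 k2.
set X1 := `|_|; set X2 := `|_|; set X3 := `|_|.
set P1 := phi p1 * D; set P2 := phi p2 * D; set KD' := K * D => t0 t1 t2 t3 t4 t5.
lra.
Qed.
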